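(* Let $X$ be a normed space and $X_1\subset X_2\subset\cdots$ an increasing sequence of finite dimensional subspaces with $\bigcup_n X_n$ dense in $X$. Let $\rho$ be an accumulation point of the sequence $(r(S_{X_n}))_n$. Then $\rho\in\mathcal{R}(X)$.
   Context: For a normed space $Z$ with unit sphere $S_Z$ and kernel $\|x-y\|$, $R(S_Z):=\bigcap_{m\in\mathbb{N}}\bigcap_{w_1,\dots,w_m\in S_Z}\overline{\mathrm{conv}}\{\frac1m\sum_{j=1}^m\|x-w_j\|:x\in S_Z\}$ and $\mathcal{R}(X):=R(S_X)$. For finite dimensional $X_n$ (with the norm of $X$ restricted), $S_{X_n}$ is compact and $R(S_{X_n})$ consists of exactly one number (a known fact), denoted $r(S_{X_n})$. *)

(* Defs.v *)
From HB Require Import structures.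
From mathcomp Require Import all_boot all_order all_algebra.
From mathcomp Require Import all_classical all_reals all_analysis.
Set Implicit Arguments. Unset Strict Implicit. Unset Printing Implicit Defensive.
Import Order.TTheory GRing.Theory Num.Theory.
Import numFieldNormedType.Exports.
Local Open Scope classical_set_scope.
Local Open Scope ring_scope.

Section Defs.
Context {R : realType} {V : normedModType R}.

(** The subspace spanned by a finite family of vectors (a finite dimensional
    subspace is exactly a set of this form). *)
Definition fin_span (k : nat) (v : 'I_k -> V) : set V :=
  [set x | exists c : 'I_k -> R, x = \sum_(i < k) c i *: v i].

Definition fin_dim_subspace (Z : set V) : Prop :=
  exists k (v : 'I_k -> V), Z = fin_span v.

Definition unit_sphere (Z : set V) : set V := [set x | Z x /\ `|x| = 1].

Definition convexR (C : set R) : Prop :=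
  forall a b t, C a -> C b -> 0 <= t <= 1 -> C (t * a + (1 - t) * b).

Definition clconv (A : set R) : set R :=
  \bigcap_(C in [set C : set R | closed C /\ convexR C /\ A `<=` C]) C.

(** R(S) for the kernel ||x - y|| ; m ranges over positive integers (m = k.+1) *)
Definition Rset (S : set V) : set R :=
  [set rho | forall (k : nat) (w : 'I_k.+1 -> V), (forall j, S (w j)) ->
     clconv [set ((k.+1)%:R)^-1 * \sum_(j < k.+1) `|x - w j| | x in S] rho].

End Defs.

(* Main.v *)
Require Import Defs.
From HB Require Import structures.
From mathcomp Require Import all_boot all_order all_algebra.
From mathcomp Require Import all_classical all_reals all_analysis.
From mathcomp Require Import ring lra.
Import Order.TTheory GRing.Theory Num.Theory.
Import numFieldNormedType.Exports.
Local Open Scope classical_set_scope.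
Local Open Scope ring_scope.

Lemma closure_approx (R : realType) (C : set R) x : closed C ->
  (forall e, 0 < e -> exists c, C c /\ `|x - c| < e) -> C x.
Proof.
move=> cC H; apply: cC => B /nbhs_ballP [e /= e0 sB].
have [c [Cc h]] := H e e0.
exists c; split => //; apply: sB; rewrite -ball_normE /ball_ /=; exact: h.
Qed.

Lemma clconv_ge (R : realType) (A : set R) t y :
  (forall a, A a -> t <= a) -> clconv A y -> t <= y.
Proof.
move=> H hy; apply: (hy [set z | t <= z]); split; first exact: closed_ge.
split; last by move=> a /H.
move=> a b s /= ha hb /andP[s0 s1].
have -> : t = s * t + (1 - s) * t by ring.
rewrite lerD // ler_wpM2l // subr_ge0 //.
Qed.

Lemma clconv_le (R : realType) (A : set R) t y :
  (forall a, A a -> a <= t) -> clconv A y -> y <= t.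
Proof.
move=> H hy; apply: (hy [set z | z <= t]); split; first exact: closed_le.
split; last by move=> a /H.
move=> a b s /= ha hb /andP[s0 s1].
have -> : t = s * t + (1 - s) * t by ring.
rewrite lerD // ler_wpM2l // subr_ge0 //.
Qed.

Lemma in_clconv (R : realType) (A : set R) rho :
  (forall e, 0 < e -> exists a, A a /\ a <= rho + e) ->
  (forall e, 0 < e -> exists a, A a /\ rho - e <= a) -> clconv A rho.
Proof.
move=> H1 H2 C [cC [convC sAC]]; apply: closure_approx => // e e0.
have e20 : 0 < e / 2 by rewrite divr_gt0.
have [a [Aa ha]] := H1 _ e20.
have [b [Ab hb]] := H2 _ e20.
have [ca|ca] := ltP `|rho - a| e; first by exists a; split => //; apply: sAC.
have [cb|cb] := ltP `|rho - b| e; first by exists b; split => //; apply: sAC.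
have ar : a <= rho - e.
  move: ca; rewrite ler_normr => /orP[]; lra.
have br : rho + e <= b.
  move: cb; rewrite ler_normr => /orP[]; lra.
exists rho; split; last by rewrite subrr normr0.
have ba : 0 < b - a by lra.
have := convC a b ((b - rho) / (b - a)) (sAC _ Aa) (sAC _ Ab).
have -> : (b - rho) / (b - a) * a + (1 - (b - rho) / (b - a)) * b = rho.
  by field; rewrite gt_eqF.
apply; apply/andP; split.
  by rewrite divr_ge0 //; lra.
by rewrite ler_pdivrMr // mul1r; lra.
Qed.

Lemma mono_sub (T : Type) (X : nat -> set T) :
  (forall n, X n `<=` X n.+1) -> forall n m, (n <= m)%N -> X n `<=` X m.
Proof.
move=> H n m /subnKC <-; elim: (m - n)%N => [|d IH]; first by rewrite addn0.
by rewrite addnS => x /IH /H.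
Qed.

Lemma span_scale (R : realType) (V : normedModType R) (Z : set V) a z :
  fin_dim_subspace Z -> Z z -> Z (a *: z).
Proof.
move=> [k [v ->]] [c ->]; exists (fun i => a * c i).
by rewrite scaler_sumr; apply: eq_bigr => i _; rewrite scalerA.
Qed.

Lemma approx_pt (R : realType) (V : normedModType R) (X : nat -> set V) w d :
  (forall n, fin_dim_subspace (X n)) ->
  closure (\bigcup_n X n) = setT -> `|w| = 1 -> 0 < d ->
  exists n y, X n y /\ `|y| = 1 /\ `|w - y| <= d.
Proof.
move=> hX hcl w1 d0.
pose d' := Num.min (d / 2) (1 / 2).
have d'0 : 0 < d' by rewrite lt_min !divr_gt0.
have d'd : d' <= d / 2 by rewrite ge_min lexx.
have d'1 : d' <= 1 / 2 by rewrite ge_min lexx orbT.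
have : closure (\bigcup_n X n) w by rewrite hcl.
move=> /(_ (ball w d')) [].
  by apply/nbhs_ballP; exists d'.
move=> z [[n _ Xz] bz].
have wz : `|w - z| < d' by move: bz; rewrite -ball_normE /ball_ /=.
have hz := ler_dist_dist w z.
have zpos : 0 < `|z|.
  move: hz; rewrite w1 ler_norml => /andP[h1 h2]; lra.
exists n, (`|z|^-1 *: z); split; first exact: span_scale.
split; first by rewrite normrZ normfV normr_id mulVf // gt_eqF.
have e1 : z - `|z|^-1 *: z = (1 - `|z|^-1) *: z by rewrite scalerBl scale1r.
have e2 : `|z - `|z|^-1 *: z| = `| `|z| - 1|.
  rewrite e1 normrZ -{2}(ger0_norm (ltW zpos)) -normrM mulrBl mul1r mulVf //.
  by rewrite gt_eqF.
have : `|w - `|z|^-1 *: z| <= `|w - z| + `|z - `|z|^-1 *: z| by exact: ler_distD.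
rewrite e2; move: hz; rewrite w1 (distrC 1) => hz h.
lra.
Qed.

Lemma avg_le (R : realType) (V : normedModType R) k (w w' : 'I_k.+1 -> V) x d :
  (forall j, `|w j - w' j| <= d) ->
  ((k.+1)%:R)^-1 * \sum_(j < k.+1) `|x - w j| <=
  ((k.+1)%:R)^-1 * \sum_(j < k.+1) `|x - w' j| + d.
Proof.
move=> H.
have m0 : 0 < (k.+1)%:R :> R by rewrite ltr0n.
have -> : d = ((k.+1)%:R)^-1 * \sum_(j < k.+1) d.
  rewrite sumr_const card_ord -[d *+ _]mulr_natr mulrCA mulVf ?mulr1 //.
rewrite -mulrDr ler_pM2l ?invr_gt0 // -big_split /=.
apply: ler_sum => j _.
apply: le_trans (ler_distD (w' j) x (w j)) _.
by rewrite lerD2l distrC.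
Qed.

Lemma approx_fam (R : realType) (V : normedModType R) (X : nat -> set V) k
  (w : 'I_k.+1 -> V) d :
  (forall n, fin_dim_subspace (X n)) -> (forall n, X n `<=` X n.+1) ->
  closure (\bigcup_n X n) = setT -> (forall j, `|w j| = 1) -> 0 < d ->
  exists N (w' : 'I_k.+1 -> V), forall j,
    X N (w' j) /\ `|w' j| = 1 /\ `|w j - w' j| <= d.
Proof.
move=> hX hmono hcl w1 d0.
have : forall j : 'I_k.+1, exists p : nat * V,
    X p.1 p.2 /\ `|p.2| = 1 /\ `|w j - p.2| <= d.
  move=> j; have [n [y hy]] := @approx_pt _ _ X (w j) d hX hcl (w1 j) d0.
  by exists (n, y).
move=> /choice [f hf].
exists (\max_(j < k.+1) (f j).1)%N, (fun j => (f j).2) => j.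
have [h1 [h2 h3]] := hf j; split => //.
apply: (@mono_sub _ X hmono (f j).1) h1.
exact: (leq_bigmax (F := fun j => (f j).1) j).
Qed.

Theorem corollary4p6 (R : realType) (V : normedModType R)
  (X : nat -> set V) (r : nat -> R) (rho : R) :
  (forall n, fin_dim_subspace (X n)) ->
  (forall n, X n `<=` X n.+1) ->
  closure (\bigcup_n X n) = setT ->
  (* r n = r(S_{X_n}), the unique element of R(S_{X_n}) (when X_n <> {0}) *)
  (forall n, (exists x, X n x /\ x != 0) -> Rset (unit_sphere (X n)) = [set r n]) ->
  (* rho is an accumulation point of (r n)_n *)
  (forall e : R, 0 < e -> forall N : nat, exists2 n : nat, (N <= n)%N & `|r n - rho| < e) ->
  Rset (unit_sphere (@setT V)) rho.
Proof.
move=> hX hmono hcl hr hacc k w hw.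
have w1 : forall j, `|w j| = 1 by move=> j; case: (hw j).
have key : forall e, 0 < e -> exists n (w' : 'I_k.+1 -> V),
    (forall j, unit_sphere (X n) (w' j)) /\ (forall j, `|w j - w' j| <= e) /\
    `|r n - rho| < e /\ Rset (unit_sphere (X n)) (r n).
  move=> e e0.
  have [N [w' hw']] := @approx_fam _ _ X k w e hX hmono hcl w1 e0.
  have [n Nn hn] := hacc e e0 N.
  have hS : forall j, unit_sphere (X n) (w' j).
    move=> j; have [h1 [h2 _]] := hw' j; split => //.
    exact: (@mono_sub _ X hmono _ _ Nn).
  exists n, w'; split => //; split; first by move=> j; case: (hw' j) => _ [].
  split => //.
  rewrite hr //; exists (w' ord0); split; first by case: (hS ord0).
  by rewrite -normr_gt0; case: (hS ord0) => _ ->.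
apply: in_clconv => e e0.
- case: (pselect (exists a, [set ((k.+1)%:R)^-1 * \sum_(j < k.+1) `|x - w j| | x in unit_sphere setT] a /\ a <= rho + e)) => // Hn; exfalso.
  have Hall : forall x, `|x| = 1 -> rho + e < ((k.+1)%:R)^-1 * \sum_(j < k.+1) `|x - w j|.
    move=> x x1; rewrite ltNge; apply/negP => h; apply: Hn.
    by eexists; split; [exists x | exact: h].
  have e3 : 0 < e / 3 by rewrite divr_gt0.
  have [n [w' [hw' [hd [hrn hR]]]]] := key _ e3.
  have := hR k w' hw'.
  move=> /(@clconv_ge _ _ (rho + e - e / 3)) => H.
  have : rho + e - e / 3 <= r n.
    apply: H => a [x [_ x1] <-].
    have := @avg_le _ _ k w w' x (e / 3) hd.
    have := Hall x x1.
    move=> h1 h2; move: h1 h2; set A := (_ * \sum_(j < k.+1) `|x - w j|); set B := (_ * \sum_(j < k.+1) `|x - w' j|); lra.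
  move: hrn; rewrite ltr_norml => /andP[]; lra.
- case: (pselect (exists a, [set ((k.+1)%:R)^-1 * \sum_(j < k.+1) `|x - w j| | x in unit_sphere setT] a /\ rho - e <= a)) => // Hn; exfalso.
  have Hall : forall x, `|x| = 1 -> ((k.+1)%:R)^-1 * \sum_(j < k.+1) `|x - w j| < rho - e.
    move=> x x1; rewrite ltNge; apply/negP => h; apply: Hn.
    by eexists; split; [exists x | exact: h].
  have e3 : 0 < e / 3 by rewrite divr_gt0.
  have [n [w' [hw' [hd [hrn hR]]]]] := key _ e3.
  have hd' : forall j, `|w' j - w j| <= e / 3 by move=> j; rewrite distrC.
  have := hR k w' hw'.
  move=> /(@clconv_le _ _ (rho - e + e / 3)) => H.
  have : r n <= rho - e + e / 3.
    apply: H => a [x [_ x1] <-].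
    have := @avg_le _ _ k w' w x (e / 3) hd'.
    have := Hall x x1.
    move=> h1 h2; move: h1 h2; set A := (_ * \sum_(j < k.+1) `|x - w j|); set B := (_ * \sum_(j < k.+1) `|x - w' j|); lra.
  move: hrn; rewrite ltr_norml => /andP[]; lra.
Qed.
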